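(* Let $d\ge 2$ and let $D\subset T_d$ be a domain with $|D|\ge 2$ and $|D|\equiv 2\pmod{d-1}$. Then $D$ is optimal if and only if $D$ is full.
   Context: $T_d$ is the $d$-regular tree (connected, acyclic, every vertex of degree $d$). A domain is a finite nonempty connected set $D$ of vertices of $T_d$, identified with its induced subgraph. For $x\in D$, $\deg_D(x)$ is the number of neighbours of $x$ lying in $D$. The (inner vertex) boundary is $\partial D=\{x\in D:\deg_D(x)<d\}$. For $k\ge1$, $I_d(k)=\min\{|\partial D| : D\subset T_d \text{ a domain with } |D|=k\}$, and $D$ is optimal if $|\partial D|=I_d(|D|)$. For $|D|\ge2$, $R(D)=\{x\in\partial D: 2\le \deg_D(x)\le d-1\}$ and $D$ is full if $R(D)=\emptyset$. *)

(* Defs.v *)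
From mathcomp Require Import all_boot.
Set Implicit Arguments. Unset Strict Implicit. Unset Printing Implicit Defensive.

(* Model of the d-regular tree T_d: vertices are reduced words over the
   alphabet 'I_d (no two consecutive equal letters), i.e. elements of the
   free product of d copies of Z/2Z; x ~ y iff one is the other extended by
   one letter.  Every vertex then has exactly d neighbours. *)
Definition vtx (d : nat) := seq 'I_d.

Definition reduced (d : nat) (x : vtx d) : bool :=
  sorted (fun a b : 'I_d => a != b) x.

Definition child (d : nat) (x y : vtx d) : bool :=
  (size y == (size x).+1) && (take (size x) y == x).
Definition adj (d : nat) (x y : vtx d) : bool := child x y || child y x.

(* A finite vertex set is represented by a duplicate-free list. *)
Definition connected_set (d : nat) (D : seq (vtx d)) : Prop :=
  forall x y, x \in D -> y \in D ->
    exists p : seq (vtx d),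
      [/\ path (@adj d) x p, last x p = y & all (fun z => z \in D) p].

Definition domain (d : nat) (D : seq (vtx d)) : Prop :=
  [/\ uniq D, D != [::], all (@reduced d) D & connected_set D].

Definition degD (d : nat) (D : seq (vtx d)) (x : vtx d) : nat :=
  count (adj x) D.

Definition bnd (d : nat) (D : seq (vtx d)) : seq (vtx d) :=
  [seq x <- D | degD D x < d].

Definition optimal (d : nat) (D : seq (vtx d)) : Prop :=
  forall D' : seq (vtx d), domain D' -> size D' = size D ->
    size (bnd D) <= size (bnd D').

Definition Rset (d : nat) (D : seq (vtx d)) : seq (vtx d) :=
  [seq x <- bnd D | (2 <= degD D x) && (degD D x <= d.-1)].

Definition full (d : nat) (D : seq (vtx d)) : Prop := Rset D = [::].

(* Main.v *)
Require Import Defs.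
From mathcomp Require Import all_boot zify.
Set Implicit Arguments. Unset Strict Implicit. Unset Printing Implicit Defensive.

Lemma count_big (T : Type) (a : pred T) s : count a s = \sum_(x <- s) a x.
Proof. by rewrite -sumn_count sumnE big_map. Qed.

Lemma child_rcons d (x : vtx d) a : child x (rcons x a).
Proof. by rewrite /child size_rcons eqxx /= -cats1 take_size_cat. Qed.

Lemma childE d (x y : vtx d) : child x y -> exists a, y = rcons x a.
Proof.
move=> /andP[/eqP hs /eqP ht].
have := cat_take_drop (size x) y; rewrite ht.
have : size (drop (size x) y) = 1 by rewrite size_drop hs subSnn.
case: (drop _ _) => [|a [|]] //= _ <-; exists a; by rewrite cats1.
Qed.

Lemma childP d (x y : vtx d) : child x y <-> exists a, y = rcons x a.
Proof. split; [exact: childE| by move=> [a ->]; apply: child_rcons]. Qed.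

Lemma child_uniq d (x x' y : vtx d) : child x y -> child x' y -> x = x'.
Proof.
move=> /childE[a ->] /childE[b] /rcons_inj; by case.
Qed.

Lemma child_size d (x y : vtx d) : child x y -> size y = (size x).+1.
Proof. by move=> /childE[a ->]; rewrite size_rcons. Qed.

Lemma uniq_size1 (T : eqType) (s : seq T) :
  uniq s -> (forall a b, a \in s -> b \in s -> a = b) -> size s <= 1.
Proof.
case: s => [|a [|b s]] //= /andP[ha _] H.
have := H a b; rewrite !inE !eqxx orbT => /(_ isT isT) E.
by move: ha; rewrite E inE eqxx.
Qed.

Lemma count_ge (T : eqType) (p : pred T) (s L : seq T) :
  uniq L -> (forall z, z \in L -> (z \in s) && p z) -> size L <= count p s.
Proof.
move=> uL H; rewrite -size_filter; apply: uniq_leq_size => // z /H.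
by rewrite mem_filter andbC.
Qed.

Definition top d (D : seq (vtx d)) (y : vtx d) := ~~ has (fun x => child x y) D.

Lemma top_exists d (D : seq (vtx d)) : D != [::] -> has (top D) D.
Proof.
move=> nD; apply/negPn/negP => /hasPn H.
have K : forall n y, y \in D -> n <= size y.
  elim=> // n IH y yD; have := H y yD; rewrite /top negbK => /hasP[x xD cxy].
  by rewrite (child_size cxy) ltnS IH.
case: D nD H K => // y D _ _ /(_ (size y).+1 y); rewrite inE eqxx ltnn.
by move/(_ isT).
Qed.

Lemma top_prefix d (D : seq (vtx d)) t : top D t -> forall p v s,
  path (@adj d) v p -> all (fun z => z \in D) p -> v = t ++ s ->
  exists s', last v p = t ++ s'.
Proof.
move=> tt; elim=> [|u p IH] v s /=; first by move=> _ _ ->; exists s.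
move=> /andP[avu pu] /andP[uD aD] vE.
case/orP: avu => [/childE[a uE]|/childE[a vE']].
  by apply: (IH u (rcons s a)) => //; rewrite uE vE rcons_cat.
case/lastP: s vE => [|s' b] vE.
  have : child u t by rewrite -[t]cats0 -vE vE' child_rcons.
  by move: tt => /hasPn/(_ u uD) /negbTE ->.
apply: (IH u s') => //.
by move: vE; rewrite vE' -rcons_cat => /rcons_inj [].
Qed.

Lemma top_unique d (D : seq (vtx d)) t1 t2 : connected_set D ->
  t1 \in D -> t2 \in D -> top D t1 -> top D t2 -> t1 = t2.
Proof.
move=> cD h1 h2 tt1 tt2.
have [p1 [pp1 l1 a1]] := cD _ _ h1 h2.
have [p2 [pp2 l2 a2]] := cD _ _ h2 h1.
have [s1 E1] := top_prefix tt1 pp1 a1 (esym (cats0 t1)).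
have [s2 E2] := top_prefix tt2 pp2 a2 (esym (cats0 t2)).
rewrite l1 in E1; rewrite l2 in E2.
have : size t2 = size t2 + size s2 + size s1.
  by rewrite -size_cat -E2 -size_cat -E1.
rewrite -addnA -{1}[size t2]addn0 => /eqP; rewrite eqn_add2l eq_sym addn_eq0.
case/andP=> /eqP/size0nil s2E _; by rewrite E2 s2E cats0.
Qed.

Lemma count_top d (D : seq (vtx d)) : domain D -> count (top D) D = 1.
Proof.
case=> uD nD _ cD; apply/eqP; rewrite eqn_leq; apply/andP; split.
  rewrite -size_filter; apply: uniq_size1; first exact: filter_uniq.
  move=> a b; rewrite !mem_filter => /andP[ta aD] /andP[tb bD].
  exact: (top_unique cD aD bD ta tb).
rewrite -has_count; exact: top_exists.
Qed.

Lemma count_parent d (D : seq (vtx d)) y : uniq D ->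
  count (fun x => child x y) D = ~~ top D y.
Proof.
move=> uD; rewrite /top negbK.
case: (boolP (has _ _)) => h; last by apply/eqP; rewrite eqn0Ngt -has_count.
apply/eqP; rewrite eqn_leq -has_count h andbT -size_filter.
apply: uniq_size1; first exact: filter_uniq.
move=> a b; rewrite !mem_filter => /andP[ha _] /andP[hb _].
exact: child_uniq ha hb.
Qed.

Lemma handshake d (D : seq (vtx d)) : domain D ->
  \sum_(x <- D) degD D x = 2 * (size D).-1.
Proof.
move=> dD; have [uD _ _ _] := dD.
have E : forall x, degD D x = count (child x) D + count (fun y => child y x) D.
  move=> x; rewrite /degD -count_predUI.
  rewrite (@eq_count _ (predI _ _) pred0) ?count_pred0 ?addn0 //.
  move=> y /=; apply/negP => /andP[/child_size h1 /child_size h2].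
  lia.
rewrite (eq_bigr _ (fun x _ => E x)) big_split /=.
have X : \sum_(x <- D) count (child x) D = \sum_(y <- D) count (fun x => child x y) D.
  under eq_bigr do rewrite count_big.
  rewrite exchange_big /=; apply: eq_bigr => y _; by rewrite count_big.
rewrite X addnn -mul2n; congr (_ * _).
under eq_bigr do rewrite count_parent //.
rewrite -count_big.
have := count_predC (top D) D; rewrite count_top // => <-.
by rewrite add1n.
Qed.

Lemma reduced_rcons d (y : 'I_d) ys a :
  reduced (rcons (y :: ys) a) = reduced (y :: ys) && (last y ys != a).
Proof. by rewrite /reduced rcons_cons /= rcons_path. Qed.

Lemma count_neq d (c : 'I_d) : count (fun a => c != a) (enum 'I_d) = d.-1.
Proof.
have := count_predC (fun a => c != a) (enum 'I_d).
rewrite size_enum_ord.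
rewrite (@eq_count _ (predC _) (pred1 c)); last by move=> a /=; rewrite negbK eq_sym.
rewrite count_uniq_mem ?enum_uniq // mem_enum /=.
case: d c => [[]|d] //= c; lia.
Qed.

Lemma deg_le_d d (D : seq (vtx d)) x : uniq D -> all (@reduced d) D ->
  degD D x <= d.
Proof.
move=> uD rD; rewrite /degD -size_filter.
pose L : seq (vtx d) := if x is y :: ys then
   belast y ys :: [seq rcons x a | a <- [seq a <- enum 'I_d | last y ys != a]]
   else [seq [:: a] | a <- enum 'I_d].
have sL : size L = d.
  rewrite {}/L; case: x => [|y ys]; first by rewrite size_map size_enum_ord.
  rewrite /= size_map size_filter count_neq; by rewrite prednK // (leq_ltn_trans (leq0n y) (ltn_ord y)).
apply: (@leq_trans (size L)); last by rewrite sL.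
clear sL.
apply: uniq_leq_size; first exact: filter_uniq.
move=> z; rewrite mem_filter => /andP[azx zD].
have rz : reduced z by move/allP: rD; apply.
case/orP: azx => [/childE[a zE]|/childE[a xE]].
  rewrite {}/L; case: x zE => [|y ys] zE; first by rewrite zE map_f ?mem_enum.
  rewrite inE; apply/orP; right; rewrite zE map_f // mem_filter mem_enum andbT.
  by move: rz; rewrite zE reduced_rcons => /andP[].
rewrite {}/L; case: x xE => [|y ys] xE; first by move/(congr1 size): xE; rewrite size_rcons.
have := lastI y ys; rewrite xE => /rcons_inj [<- _].
by rewrite inE eqxx.
Qed.

Lemma deg_ge1 d (D : seq (vtx d)) x : domain D -> 2 <= size D -> x \in D ->
  0 < degD D x.
Proof.
case=> uD _ _ cD sD xD.
case: (boolP (has (fun y => y != x) D)) => [/hasP[y yD yx]|/hasPn H]; last first.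
  have : size D <= 1.
    apply: uniq_size1 => // a b aD bD.
    by move: (H a aD) (H b bD); rewrite !negbK => /eqP -> /eqP ->.
  by rewrite leqNgt sD.
have [[|u p] [pp lp ap]] := cD x y xD yD; first by move: yx; rewrite -lp /= eqxx.
rewrite /degD -has_count; apply/hasP; exists u; first by case/andP: ap.
by case/andP: pp.
Qed.

Lemma sum_ind (T : Type) (s : seq T) (a b c : pred T) (d : nat) :
  \sum_(x <- s) (d * a x + b x + c x) = d * count a s + count b s + count c s.
Proof. by rewrite !big_split /= -big_distrr /= !count_big. Qed.

Definition Pint d (D : seq (vtx d)) x := d <= degD D x.
Definition Qr d (D : seq (vtx d)) x := (degD D x < d) && (2 <= degD D x).

Lemma general_ineq d (D : seq (vtx d)) : 1 <= d -> domain D -> 2 <= size D ->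
  count (Qr D) D + d.-1 * count (Pint D) D <= size D - 2.
Proof.
move=> d1 dD sD.
have H : \sum_(x <- D) (d * Pint D x + predC (Pint D) x + Qr D x) <=
         \sum_(x <- D) degD D x.
  rewrite big_seq_cond [X in _ <= X]big_seq_cond; apply: leq_sum => x /andP[xD _].
  have g1 := deg_ge1 dD sD xD.
  rewrite /Pint /Qr /=; case: leqP => h; case: leqP => h2 /=; lia.
rewrite (sum_ind D (Pint D) (predC (Pint D)) (Qr D) d) handshake // in H.
have E1 := count_predC (Pint D) D.
have E2 : d.-1 * count (Pint D) D + count (Pint D) D = d * count (Pint D) D.
  by rewrite addnC -mulSn prednK.
move: H E1 E2; set a := d * _; set b := d.-1 * _; lia.
Qed.

Lemma full_ineq d (D : seq (vtx d)) : 1 <= d -> domain D -> 2 <= size D ->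
  full D -> size D - 2 <= d.-1 * count (Pint D) D.
Proof.
move=> d1 dD sD fD; have [uD _ rD _] := dD.
have H : \sum_(x <- D) degD D x <=
    \sum_(x <- D) (d * Pint D x + predC (Pint D) x + (fun _ => false) x).
  rewrite big_seq_cond [X in _ <= X]big_seq_cond; apply: leq_sum => x /andP[xD _].
  have g1 := deg_le_d x uD rD.
  have nR : x \notin Rset D by rewrite fD.
  move: nR; rewrite /Rset mem_filter /bnd mem_filter xD.
  rewrite /Pint /=; case: leqP => h; case: leqP => h2; case: leqP => h3 /=; lia.
rewrite (sum_ind D (Pint D) (predC (Pint D)) (fun _ => false) d) handshake // in H.
have E1 := count_predC (Pint D) D.
have E2 : d.-1 * count (Pint D) D + count (Pint D) D = d * count (Pint D) D.
  by rewrite addnC -mulSn prednK.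
rewrite count_pred0 in H.
move: H E1 E2; set a := d * _; set b := d.-1 * _; lia.
Qed.


Lemma conn_root d (D : seq (vtx d)) r : r \in D ->
  (forall x, x \in D -> exists p, [/\ path (@adj d) r p, last r p = x & all (fun z => z \in D) p]) ->
  connected_set D.
Proof.
move=> rD H x y xD yD.
have [px [ppx lpx apx]] := H x xD.
have [py [ppy lpy apy]] := H y yD.
have sym : (fun z w => @adj d w z) =2 @adj d by move=> z w; rewrite /adj orbC.
exists (rev (belast r px) ++ py); split.
- rewrite cat_path; apply/andP; split.
    by rewrite -lpx rev_path (eq_path sym).
  suff -> : last x (rev (belast r px)) = r by [].
  case: px {ppx apx} lpx => [|u p] /= lp; first by rewrite lp.
  by rewrite rev_cons last_rcons.
- rewrite last_cat; suff -> : last x (rev (belast r px)) = r by [].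
  case: px {ppx apx} lpx => [|u p] /= lp; first by rewrite lp.
  by rewrite rev_cons last_rcons.
- rewrite all_cat all_rev apy andbT; apply/allP => z /mem_belast.
  rewrite inE => /orP[/eqP -> //|]; by move/allP: apx; apply.
Qed.

Definition lt d (a0 a1 : 'I_d) i := if odd i then a1 else a0.
Fixpoint w d (a0 a1 : 'I_d) i : vtx d :=
  if i is i'.+1 then rcons (w a0 a1 i') (lt a0 a1 i') else [::].
Definition ok d (a0 a1 : 'I_d) j (a : 'I_d) := (j == 0) || (a != lt a0 a1 j.-1).
Definition Dc d (a0 a1 : 'I_d) M : seq (vtx d) :=
  [::] :: [seq rcons (w a0 a1 j) a | j <- iota 0 M, a <- [seq a <- enum 'I_d | ok a0 a1 j a]].

Lemma size_w d (a0 a1 : 'I_d) j : size (w a0 a1 j) = j.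
Proof. by elim: j => //= j IH; rewrite size_rcons IH. Qed.

Lemma w_inj d (a0 a1 : 'I_d) : injective (w a0 a1).
Proof. by move=> i j /(congr1 size); rewrite !size_w. Qed.

Lemma lt_neq d (a0 a1 : 'I_d) i : a0 != a1 -> lt a0 a1 i != lt a0 a1 i.+1.
Proof. by rewrite /lt /=; case: (odd i) => //=; rewrite eq_sym. Qed.

Lemma ok_spine d (a0 a1 : 'I_d) j : a0 != a1 -> ok a0 a1 j (lt a0 a1 j).
Proof. by case: j => //= j h; rewrite /ok /= eq_sym lt_neq. Qed.

Lemma reduced_rcons2 d (s : vtx d) c a :
  reduced (rcons (rcons s c) a) = reduced (rcons s c) && (c != a).
Proof.
case: s => [|y s]; first by rewrite /reduced /= andbT.
by rewrite rcons_cons reduced_rcons last_rcons.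
Qed.

Lemma red_all d (a0 a1 : 'I_d) j : a0 != a1 ->
  reduced (w a0 a1 j) /\ forall a, ok a0 a1 j a -> reduced (rcons (w a0 a1 j) a).
Proof.
move=> h; elim: j => [|j [IH1 IH2]]; first by split.
have r1 : reduced (w a0 a1 j.+1) by apply: IH2; apply: ok_spine.
split=> // a; rewrite /ok /= => na.
by rewrite reduced_rcons2 -/(w a0 a1 j.+1) r1 eq_sym.
Qed.

Lemma leaves_in d (a0 a1 : 'I_d) M j a : j < M -> ok a0 a1 j a ->
  rcons (w a0 a1 j) a \in Dc a0 a1 M.
Proof.
move=> jM oa; rewrite inE; apply/orP; right.
apply/allpairsPdep; exists j, a; split=> //.
  by rewrite mem_iota.
by rewrite mem_filter oa mem_enum.
Qed.

Lemma spine_in d (a0 a1 : 'I_d) M j : a0 != a1 -> j < M -> w a0 a1 j \in Dc a0 a1 M.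
Proof.
move=> h; case: j => [|j] jM; first by rewrite inE eqxx.
apply: leaves_in; [exact: ltnW | exact: ok_spine].
Qed.

Lemma sumn_const (T : Type) (s : seq T) c : sumn [seq c | _ <- s] = size s * c.
Proof. by elim: s => //= _ s ->; rewrite mulSn. Qed.

Lemma Dc_size d (a0 a1 : 'I_d) m : 2 <= d ->
  size (Dc a0 a1 m.+1) = m.+1 * d.-1 + 2.
Proof.
move=> d2; rewrite /Dc -cat1s size_cat size_allpairs_dep /=.
rewrite size_filter (@eq_count _ _ predT) // count_predT size_enum_ord.
rewrite (_ : map _ (iota 1 m) = map (fun _ => d.-1) (iota 1 m)).
  rewrite sumn_const size_iota mulSn; lia.
apply/eq_in_map => j; rewrite mem_iota => /andP[j1 _].
rewrite size_filter -(count_neq (lt a0 a1 j.-1)); apply: eq_count => a.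
by rewrite /ok; case: j j1 => //= j _; rewrite eq_sym.
Qed.

Lemma Dc_uniq d (a0 a1 : 'I_d) M : uniq (Dc a0 a1 M).
Proof.
rewrite /Dc cons_uniq; apply/andP; split.
  apply/negP => /allpairsPdep[j [a [_ _ E]]].
  by move/(congr1 size): E; rewrite size_rcons.
apply: allpairs_uniq_dep; first exact: iota_uniq.
  by move=> j _; apply: filter_uniq; apply: enum_uniq.
move=> [j a] [j' a'] _ _ /= /rcons_inj [/w_inj E ->]; by subst.
Qed.

Lemma spine_path d (a0 a1 : 'I_d) M j : a0 != a1 -> j < M ->
  exists p, [/\ path (@adj d) [::] p, last [::] p = w a0 a1 j &
                all (fun z => z \in Dc a0 a1 M) p].
Proof.
move=> h; elim: j => [|j IH] jM; first by exists [::].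
have [p [pp lp ap]] := IH (ltnW jM).
exists (rcons p (w a0 a1 j.+1)); split.
- by rewrite rcons_path pp lp /adj /= child_rcons.
- by rewrite last_rcons.
- by rewrite all_rcons ap spine_in.
Qed.

Lemma Dc_domain d (a0 a1 : 'I_d) M : a0 != a1 -> domain (Dc a0 a1 M).
Proof.
move=> h; split; [exact: Dc_uniq | by [] | |].
  apply/allP => z; rewrite inE => /orP[/eqP -> //|/allpairsPdep[j [a [_ oa ->]]]].
  by move: oa; rewrite mem_filter => /andP[oa _]; case: (red_all j h) => _; apply.
apply: (@conn_root _ _ [::]); first by rewrite inE eqxx.
move=> x; rewrite inE => /orP[/eqP ->|/allpairsPdep[j [a [jM oa ->]]]].
  by exists [::].
move: jM oa; rewrite mem_iota add0n mem_filter => /andP[_ jM] /andP[oa _].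
have [p [pp lp ap]] := spine_path h jM.
exists (rcons p (rcons (w a0 a1 j) a)); split.
- by rewrite rcons_path pp lp /adj child_rcons.
- by rewrite last_rcons.
- by rewrite all_rcons ap leaves_in.
Qed.

Lemma spine_deg d (a0 a1 : 'I_d) M j : a0 != a1 -> j < M ->
  d <= degD (Dc a0 a1 M) (w a0 a1 j).
Proof.
move=> h jM; rewrite /degD.
pose C := [seq rcons (w a0 a1 j) a | a <- [seq a <- enum 'I_d | ok a0 a1 j a]].
have uC : uniq C.
  rewrite map_inj_uniq; first by apply: filter_uniq; apply: enum_uniq.
  by move=> a b /rcons_inj [].
have mC : forall z, z \in C -> (z \in Dc a0 a1 M) && adj (w a0 a1 j) z.
  move=> z /mapP[a]; rewrite mem_filter => /andP[oa _] ->.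
  by rewrite leaves_in //= /adj child_rcons.
have sC : size C = count (ok a0 a1 j) (enum 'I_d) by rewrite size_map size_filter.
have hC : forall z, z \in C -> size z = j.+1.
  by move=> z /mapP[a _ ->]; rewrite size_rcons size_w.
clearbody C.
case: j jM C uC mC sC hC => [|j] jM C uC mC sC hC.
  apply: leq_trans (count_ge uC mC).
  rewrite sC (@eq_count _ _ predT) // count_predT size_enum_ord //.
apply: leq_trans (@count_ge _ _ _ (w a0 a1 j :: C) _ _).
  rewrite /= sC (@eq_count _ _ (fun a => lt a0 a1 j != a)).
    by rewrite count_neq leqSpred.
  by move=> a; rewrite /ok /= eq_sym.
  rewrite cons_uniq uC andbT; apply/negP => /hC; rewrite size_w; lia.
move=> z; rewrite inE => /orP[/eqP ->|/mC //].
by rewrite spine_in ?(ltnW jM) //= /adj child_rcons orbT.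
Qed.

Lemma construct d m : 2 <= d -> exists D' : seq (vtx d),
  [/\ domain D', size D' = m.+1 * d.-1 + 2 & m.+1 <= count (Pint D') D'].
Proof.
move=> d2.
have h0 : 0 < d by apply: leq_trans d2.
pose a0 : 'I_d := Ordinal h0.
pose a1 : 'I_d := Ordinal d2.
have h : a0 != a1 by [].
exists (Dc a0 a1 m.+1); split; first exact: Dc_domain.
  exact: Dc_size.
have := @count_ge _ (Pint (Dc a0 a1 m.+1)) (Dc a0 a1 m.+1) [seq w a0 a1 j | j <- iota 0 m.+1].
rewrite size_map size_iota; apply.
  by rewrite map_inj_uniq ?iota_uniq //; apply: w_inj.
move=> z /mapP[j]; rewrite mem_iota add0n => jM ->.
by rewrite spine_in //= /Pint spine_deg.
Qed.
Lemma size_bnd d (D : seq (vtx d)) : size (bnd D) = size D - count (Pint D) D.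
Proof.
rewrite /bnd size_filter -(count_predC (Pint D) D) addKn.
by apply: eq_count => x; rewrite /= /Pint ltnNge.
Qed.

Unset Implicit Arguments.

Theorem mainTheorem11 (d : nat) (D : seq (vtx d)) :
  2 <= d -> domain D -> 2 <= size D -> size D = 2 %[mod d.-1] ->
  (optimal D <-> full D).
Proof.
move=> d2 dD sD hmod.
have d1 : 1 <= d by apply: leq_trans d2.
have dv : d.-1 %| size D - 2 by rewrite -eqn_mod_dvd // hmod.
set m0 := (size D - 2) %/ d.-1.
have km : size D - 2 = m0 * d.-1 by rewrite divnK.
have cle : count (Pint D) D <= size D by apply: count_size.
split=> [opt|fD].
  have gi := general_ineq d1 dD sD.
  have Im : m0 <= count (Pint D) D.
    case E: m0 => [//|m].
    have [D' [dD' sD' cD']] := construct m d2.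
    have := opt D' dD'; rewrite sD' -E -km subnK // !size_bnd => /(_ erefl).
    have := count_size (Pint D') D'.
    rewrite sD' -E -km subnK //; lia.
  have cQ : count (Qr D) D = 0.
    have : m0 * d.-1 <= d.-1 * count (Pint D) D by rewrite mulnC leq_mul2l Im orbT.
    move: gi; rewrite km; set a := _ * _; set b := _ * _; lia.
  case E: (Rset D) => [//|z s].
  have : z \in Rset D by rewrite E inE eqxx.
  rewrite /Rset /bnd !mem_filter => /andP[/andP[h1 h2] /andP[h3 zD]].
  have : has (Qr D) D by apply/hasP; exists z => //; rewrite /Qr h1 h3.
  by rewrite has_count cQ.
move=> D' dD' sD'.
have fi := full_ineq d1 dD sD fD.
have gi := general_ineq d1 dD' (leq_trans sD (eq_leq (esym sD'))).
have : count (Pint D') D' <= count (Pint D) D.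
  rewrite -(@leq_pmul2l d.-1) ?(ltn_predRL) //.
  move: gi fi; rewrite sD'; set a := d.-1 * _; set b := d.-1 * _; lia.
rewrite !size_bnd sD'; lia.
Qed.
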